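(* In the one-parameter family of $SU(2)$-invariant hyperKähler structures on the non-zero nilpotent orbit $\mathcal O\subset\mathfrak{sl}(2,\mathbb C)$ with complex symplectic form $k^2\omega_c^{\mathcal O}$ and Kähler potential $\rho$ satisfying $\rho'(\eta)=\frac1\eta\sqrt{k^2\eta+c}$ ($c\ge0$), the Kähler potential $\rho$ is a hyperKähler potential if and only if $c=0$. In that case, up to an additive constant, $\rho=2k\sqrt\eta$, and $\rho(te)=4k^2t$ for $t>0$.
   Context: $\langle\cdot,\cdot\rangle_{\mathfrak{sl}(2)}$ is the negative Killing form of $\mathfrak{sl}(2,\mathbb C)$, $\sigma(X)=-\bar X^T$, $\eta(X)=k^2\langle X,\sigma X\rangle_{\mathfrak{sl}(2)}$, $e=\begin{pmatrix}0&1\\0&0\end{pmatrix}$. $\xi_A=[A,X]$, $I\xi_A=\xi_{iA}$, $\omega_c^{\mathcal O}(\xi_A,\xi_B)_X=\langle X,[A,B]\rangle_{\mathfrak{sl}(2)}$, and the complex symplectic form is $\omega_J+i\omega_K=k^2\omega_c^{\mathcal O}$. A hyperKähler potential is a function $\rho$ that is simultaneously a Kähler potential for $I$, $J$ and $K$, i.e. $\omega_L=-\tfrac12 dLd\rho$ for $L=I,J,K$ (with $(L\alpha)(Y)=-\alpha(LY)$). *)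

(* Defs.v *)
From Stdlib Require Import Reals ClassicalEpsilon.
From Coquelicot Require Import Coquelicot.
Open Scope R_scope.

Record M2 := mkM2 { m11 : C; m12 : C; m21 : C; m22 : C }.

Definition mzero : M2 := mkM2 (RtoC 0) (RtoC 0) (RtoC 0) (RtoC 0).
Definition mone  : M2 := mkM2 (RtoC 1) (RtoC 0) (RtoC 0) (RtoC 1).
Definition madd (X Y : M2) : M2 :=
  mkM2 (Cplus (m11 X) (m11 Y)) (Cplus (m12 X) (m12 Y))
       (Cplus (m21 X) (m21 Y)) (Cplus (m22 X) (m22 Y)).
Definition mscal (a : C) (X : M2) : M2 :=
  mkM2 (Cmult a (m11 X)) (Cmult a (m12 X)) (Cmult a (m21 X)) (Cmult a (m22 X)).
Definition mopp (X : M2) : M2 := mscal (RtoC (-1)) X.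
Definition msub (X Y : M2) : M2 := madd X (mopp Y).
Definition mmul (X Y : M2) : M2 :=
  mkM2 (Cplus (Cmult (m11 X) (m11 Y)) (Cmult (m12 X) (m21 Y)))
       (Cplus (Cmult (m11 X) (m12 Y)) (Cmult (m12 X) (m22 Y)))
       (Cplus (Cmult (m21 X) (m11 Y)) (Cmult (m22 X) (m21 Y)))
       (Cplus (Cmult (m21 X) (m12 Y)) (Cmult (m22 X) (m22 Y))).
Definition mtr (X : M2) : C := Cplus (m11 X) (m22 X).
Definition mdet (X : M2) : C :=
  Cminus (Cmult (m11 X) (m22 X)) (Cmult (m12 X) (m21 X)).
(* inverse via adjugate (meaningful when det <> 0) *)
Definition minv (X : M2) : M2 :=
  mscal (Cinv (mdet X)) (mkM2 (m22 X) (Copp (m12 X)) (Copp (m21 X)) (m11 X)).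
Definition mconjT (X : M2) : M2 :=
  mkM2 (Cconj (m11 X)) (Cconj (m21 X)) (Cconj (m12 X)) (Cconj (m22 X)).

Definition bracket (A B : M2) : M2 := msub (mmul A B) (mmul B A).

Definition traceless (A : M2) : Prop := mtr A = RtoC 0.

(* negative Killing form of sl(2,C): Killing form is B(X,Y) = 4 tr(XY) *)
Definition kf (X Y : M2) : C := Cmult (RtoC (-4)) (mtr (mmul X Y)).

Definition sigma (X : M2) : M2 := mopp (mconjT X).

(* eta(X) = k^2 <X, sigma X>  (this complex number is real; we take Re) *)
Definition eta (k : R) (X : M2) : R := k ^ 2 * Re (kf X (sigma X)).

Definition e_nil : M2 := mkM2 (RtoC 0) (RtoC 1) (RtoC 0) (RtoC 0).

Definition inO (X : M2) : Prop := X <> mzero /\ mmul X X = mzero.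

Definition xi (A X : M2) : M2 := bracket A X.
Definition tangent (X V : M2) : Prop := exists A, traceless A /\ V = xi A X.

Lemma M2_inhabited : inhabited M2. Proof. exact (inhabits mzero). Qed.

Definition lift (X V : M2) : M2 :=
  epsilon M2_inhabited (fun A => traceless A /\ V = xi A X).

(* a curve in O through X with velocity xi_A(X): s |-> g_s X g_s^{-1},
   g_s = 1 + s A *)
Definition curve (A X : M2) (s : R) : M2 :=
  let g := madd mone (mscal (RtoC s) A) in mmul (mmul g X) (minv g).

Definition LieD (A : M2) (f : M2 -> R) (X : M2) : R :=
  Derive (fun s => f (curve A X s)) 0.

(* real 1-forms: (point, tangent vector) -> R ; real 2-forms similarly *)
Definition form1 := M2 -> M2 -> R.
Definition form2 := M2 -> M2 -> M2 -> R.
(* endomorphism fields of TO: (point, tangent vector) -> tangent vector *)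
Definition endo := M2 -> M2 -> M2.

Definition dfun (f : M2 -> R) : form1 := fun X V => LieD (lift X V) f X.

Definition Lact (L : endo) (a : form1) : form1 := fun X V => - a X (L X V).

(* exterior derivative of a 1-form, computed on fundamental fields:
   d b(xi_A, xi_B) = xi_A(b(xi_B)) - xi_B(b(xi_A)) - b([xi_A, xi_B]),
   with [xi_A, xi_B] = - xi_[A,B] *)
Definition dform (b : form1) : form2 := fun X V W =>
  let A := lift X V in let B := lift X W in
  LieD A (fun Y => b Y (xi B Y)) X - LieD B (fun Y => b Y (xi A Y)) X
  + b X (xi (bracket A B) X).

(* complex structure I: I xi_A = xi_{iA}, i.e. multiplication by i *)
Definition Istr : endo := fun X V => mscal Ci V.

Definition omegaI (rho : M2 -> R) : form2 :=
  fun X V W => - / 2 * dform (Lact Istr (dfun rho)) X V W.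

(* metric g(Y,Z) = omega_I(Y, I Z), so that omega_I(Y,Z) = g(I Y, Z) *)
Definition gmet (rho : M2 -> R) : form2 :=
  fun X V W => omegaI rho X V (Istr X W).

Definition omc (X V W : M2) : C := kf X (bracket (lift X V) (lift X W)).

Definition omegaJ (k : R) : form2 := fun X V W => Re (Cmult (RtoC (k ^ 2)) (omc X V W)).
Definition omegaK (k : R) : form2 := fun X V W => Im (Cmult (RtoC (k ^ 2)) (omc X V W)).

Definition structOf (rho : M2 -> R) (om : form2) : endo := fun X V =>
  epsilon M2_inhabited (fun U => tangent X U /\
     forall W, tangent X W -> gmet rho X U W = om X V W).

Definition Jstr (k : R) (rho : M2 -> R) : endo := structOf rho (omegaJ k).
Definition Kstr (k : R) (rho : M2 -> R) : endo := structOf rho (omegaK k).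

Definition kaehler_potential_for (rho : M2 -> R) (L : endo) (om : form2) : Prop :=
  forall X, inO X -> forall V W, tangent X V -> tangent X W ->
    om X V W = - / 2 * dform (Lact L (dfun rho)) X V W.

Definition hk_potential (k : R) (rho : M2 -> R) : Prop :=
  kaehler_potential_for rho Istr (omegaI rho) /\
  kaehler_potential_for rho (Jstr k rho) (omegaJ k) /\
  kaehler_potential_for rho (Kstr k rho) (omegaK k).

(* Main.v *)
Require Import Defs.
From Stdlib Require Import Reals Lra ClassicalEpsilon.
From Coquelicot Require Import Coquelicot.
Open Scope R_scope.

Lemma Dplus (f g : R -> R) (x a b : R) : is_derive f x a -> is_derive g x b ->
  is_derive (fun t => f t + g t) x (a + b).
Proof. intros. apply (is_derive_plus f g x a b); auto. Qed.
Lemma Dminus (f g : R -> R) (x a b : R) : is_derive f x a -> is_derive g x b ->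
  is_derive (fun t => f t - g t) x (a - b).
Proof. intros. apply (is_derive_minus f g x a b); auto. Qed.
Lemma Dopp (f : R -> R) (x a : R) : is_derive f x a -> is_derive (fun t => - f t) x (- a).
Proof. intros. apply (is_derive_opp f x a); auto. Qed.
Lemma Dmult (f g : R -> R) (x a b : R) : is_derive f x a -> is_derive g x b ->
  is_derive (fun t => f t * g t) x (a * g x + f x * b).
Proof. intros. apply (is_derive_mult f g x a b); auto. intros; apply Rmult_comm. Qed.
Lemma Dconst (c x : R) : is_derive (fun _ : R => c) x 0.
Proof. apply (is_derive_const c x). Qed.
Lemma Did (x : R) : is_derive (fun t => t) x 1.
Proof. apply (is_derive_id x). Qed.
Lemma Dext (f : R -> R) (x a b : R) : is_derive f x a -> a = b -> is_derive f x b.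
Proof. intros; subst; auto. Qed.
Lemma Dextf (f g : R -> R) (x a : R) : is_derive f x a -> (forall t, f t = g t) -> is_derive g x a.
Proof. intros H E. apply (is_derive_ext f g); auto. Qed.

Definition cd (z : R -> C) (d : C) : Prop :=
  is_derive (fun s => fst (z s)) 0 (fst d) /\ is_derive (fun s => snd (z s)) 0 (snd d).

Lemma cd_const (a : C) : cd (fun _ => a) (0,0).
Proof. split; simpl; apply Dconst. Qed.
Lemma cd_plus z w d e : cd z d -> cd w e -> cd (fun s => Cplus (z s) (w s)) (Cplus d e).
Proof. intros [H1 H2] [H3 H4]; split; simpl; apply Dplus; auto. Qed.
Lemma cd_mult z w d e : cd z d -> cd w e ->
  cd (fun s => Cmult (z s) (w s)) (Cplus (Cmult d (w 0)) (Cmult (z 0) e)).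
Proof.
  intros [H1 H2] [H3 H4]; split; simpl.
  - eapply Dext. apply Dminus; apply Dmult; eauto. simpl. ring.
  - eapply Dext. apply Dplus; apply Dmult; eauto. simpl. ring.
Qed.
Lemma cd_conj z d : cd z d -> cd (fun s => Cconj (z s)) (Cconj d).
Proof. intros [H1 H2]; split; simpl; auto. apply Dopp; auto. Qed.
Lemma cd_RtoC : cd (fun s => RtoC s) (RtoC 1).
Proof. split; simpl. apply Did. apply Dconst. Qed.
Lemma Dsq (f : R -> R) x a : is_derive f x a -> is_derive (fun t => f t ^ 2) x (2 * f x * a).
Proof. intros H. eapply Dext. eapply Dextf. apply (Dmult f f); eauto.
  intros; simpl; ring. ring. Qed.
Lemma Ddiv (f g : R -> R) x a b : is_derive f x a -> is_derive g x b -> g x <> 0 ->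
  is_derive (fun t => f t / g t) x ((a * g x - f x * b) / g x ^ 2).
Proof. intros. apply is_derive_div; auto. Qed.

Lemma cd_inv z d : cd z d -> fst (z 0) ^ 2 + snd (z 0) ^ 2 <> 0 ->
  cd (fun s => Cinv (z s)) (Copp (Cmult d (Cmult (Cinv (z 0)) (Cinv (z 0))))).
Proof.
  intros [H1 H2] Hn.
  assert (Hg : is_derive (fun s => fst (z s) ^ 2 + snd (z s) ^ 2) 0
     (2 * fst (z 0) * fst d + 2 * snd (z 0) * snd d)).
  { apply Dplus; apply Dsq; auto. }
  split; simpl.
  - eapply Dext. apply Ddiv; [exact H1 | exact Hg | exact Hn]. unfold Copp, Cmult, Cinv; simpl. set (u := fst (z 0)); set (v := snd (z 0)); set (p := fst d); set (q := snd d); field.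
    intro E; apply Hn; unfold u, v in E; ring_simplify in E; ring_simplify; lra.
  - eapply Dext. apply Ddiv; [apply Dopp; exact H2 | exact Hg | exact Hn]. unfold Copp, Cmult, Cinv; simpl. set (u := fst (z 0)); set (v := snd (z 0)); set (p := fst d); set (q := snd d); field.
    intro E; apply Hn; unfold u, v in E; ring_simplify in E; ring_simplify; lra.
Qed.

Lemma cd_ext z d d' : cd z d -> d = d' -> cd z d'.
Proof. intros; subst; auto. Qed.
Lemma cd_extf z w d : cd z d -> (forall s, z s = w s) -> cd w d.
Proof. intros [H1 H2] E; split.
  - apply (Dextf (fun s => fst (z s))); auto. intros; rewrite E; auto.
  - apply (Dextf (fun s => snd (z s))); auto. intros; rewrite E; auto. Qed.

Definition md (X : R -> M2) (D : M2) : Prop :=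
  cd (fun s => m11 (X s)) (m11 D) /\ cd (fun s => m12 (X s)) (m12 D) /\
  cd (fun s => m21 (X s)) (m21 D) /\ cd (fun s => m22 (X s)) (m22 D).

Lemma md_ext X D D' : md X D -> D = D' -> md X D'.
Proof. intros; subst; auto. Qed.
Lemma md_extf X Z D : md X D -> (forall s, X s = Z s) -> md Z D.
Proof. intros (H1&H2&H3&H4) E; split; [|split; [|split]].
  - apply (cd_extf (fun s => m11 (X s))); auto. intros; rewrite E; auto.
  - apply (cd_extf (fun s => m12 (X s))); auto. intros; rewrite E; auto.
  - apply (cd_extf (fun s => m21 (X s))); auto. intros; rewrite E; auto.
  - apply (cd_extf (fun s => m22 (X s))); auto. intros; rewrite E; auto. Qed.
Lemma md_const (A : M2) : md (fun _ => A) mzero.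
Proof. split; [|split; [|split]]; apply cd_const. Qed.
Lemma md_madd X Z D E : md X D -> md Z E -> md (fun s => madd (X s) (Z s)) (madd D E).
Proof. intros (H1&H2&H3&H4) (G1&G2&G3&G4); split; [|split; [|split]]; simpl; apply cd_plus; auto. Qed.
Lemma md_mmul X Z D E : md X D -> md Z E ->
  md (fun s => mmul (X s) (Z s)) (madd (mmul D (Z 0)) (mmul (X 0) E)).
Proof.
  intros (H1&H2&H3&H4) (G1&G2&G3&G4); split; [|split; [|split]]; simpl;
  (eapply cd_ext; [apply cd_plus; apply cd_mult; eauto|
    cbv beta; destruct (X 0), (Z 0), D, E; simpl;
    repeat match goal with c : C |- _ => destruct c end;
    unfold Cplus, Cmult; simpl; f_equal; ring]).
Qed.
Lemma md_mscal z X d D : cd z d -> md X D ->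
  md (fun s => mscal (z s) (X s)) (madd (mscal d (X 0)) (mscal (z 0) D)).
Proof.
  intros Hz (H1&H2&H3&H4); split; [|split; [|split]]; simpl;
  apply cd_mult; auto.
Qed.
Lemma md_mconjT X D : md X D -> md (fun s => mconjT (X s)) (mconjT D).
Proof.
  intros (H1&H2&H3&H4); split; [|split; [|split]]; simpl; apply cd_conj; auto.
Qed.
Lemma cd_fst z d : cd z d -> is_derive (fun s => fst (z s)) 0 (fst d).
Proof. intros [H _]; exact H. Qed.
Lemma cd_mtr X D : md X D -> cd (fun s => mtr (X s)) (mtr D).
Proof. intros (H1&H2&H3&H4); unfold mtr; apply cd_plus; auto. Qed.
Lemma cd_opp z d : cd z d -> cd (fun s => Copp (z s)) (Copp d).
Proof. intros [H1 H2]; split; simpl; apply Dopp; auto. Qed.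
Lemma cd_mdet X D : md X D -> cd (fun s => mdet (X s))
  (Cminus (Cplus (Cmult (m11 D) (m22 (X 0))) (Cmult (m11 (X 0)) (m22 D)))
          (Cplus (Cmult (m12 D) (m21 (X 0))) (Cmult (m12 (X 0)) (m21 D)))).
Proof.
  intros (H1&H2&H3&H4); unfold mdet, Cminus.
  apply cd_plus. apply cd_mult; auto. apply cd_opp. apply cd_mult; auto.
Qed.

Lemma C_eq (a b : C) : fst a = fst b -> snd a = snd b -> a = b.
Proof. destruct a, b; simpl; intros; subst; auto. Qed.
Lemma M2_eq (X Y : M2) : m11 X = m11 Y -> m12 X = m12 Y -> m21 X = m21 Y -> m22 X = m22 Y -> X = Y.
Proof. destruct X, Y; simpl; intros; subst; auto. Qed.
Lemma m11_mk (a b c d : C) : m11 (mkM2 a b c d) = a.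
Proof. reflexivity. Qed.
Lemma m11_madd (X Y : M2) : m11 (madd X Y) = Cplus (m11 X) (m11 Y).
Proof. reflexivity. Qed.
Lemma m11_mscal (a : C) (X : M2) : m11 (mscal a X) = Cmult a (m11 X).
Proof. reflexivity. Qed.
Lemma m11_mopp (X : M2) : m11 (mopp X) = Cmult (RtoC (-1)) (m11 X).
Proof. reflexivity. Qed.
Lemma m11_msub (X Y : M2) : m11 (msub X Y) = Cplus (m11 X) (Cmult (RtoC (-1)) (m11 Y)).
Proof. reflexivity. Qed.
Lemma m11_mone : m11 mone = RtoC 1.
Proof. reflexivity. Qed.
Lemma m11_mzero : m11 mzero = RtoC 0.
Proof. reflexivity. Qed.
Lemma m11_mconjT (X : M2) : m11 (mconjT X) = Cconj (m11 X).
Proof. reflexivity. Qed.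
Lemma m11_mmul (X Y : M2) : m11 (mmul X Y) = Cplus (Cmult (m11 X) (m11 Y)) (Cmult (m12 X) (m21 Y)).
Proof. reflexivity. Qed.
Lemma m11_bracket (X Y : M2) : m11 (bracket X Y) = m11 (msub (mmul X Y) (mmul Y X)).
Proof. reflexivity. Qed.
Lemma m12_mk (a b c d : C) : m12 (mkM2 a b c d) = b.
Proof. reflexivity. Qed.
Lemma m12_madd (X Y : M2) : m12 (madd X Y) = Cplus (m12 X) (m12 Y).
Proof. reflexivity. Qed.
Lemma m12_mscal (a : C) (X : M2) : m12 (mscal a X) = Cmult a (m12 X).
Proof. reflexivity. Qed.
Lemma m12_mopp (X : M2) : m12 (mopp X) = Cmult (RtoC (-1)) (m12 X).
Proof. reflexivity. Qed.
Lemma m12_msub (X Y : M2) : m12 (msub X Y) = Cplus (m12 X) (Cmult (RtoC (-1)) (m12 Y)).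
Proof. reflexivity. Qed.
Lemma m12_mone : m12 mone = RtoC 0.
Proof. reflexivity. Qed.
Lemma m12_mzero : m12 mzero = RtoC 0.
Proof. reflexivity. Qed.
Lemma m12_mconjT (X : M2) : m12 (mconjT X) = Cconj (m21 X).
Proof. reflexivity. Qed.
Lemma m12_mmul (X Y : M2) : m12 (mmul X Y) = Cplus (Cmult (m11 X) (m12 Y)) (Cmult (m12 X) (m22 Y)).
Proof. reflexivity. Qed.
Lemma m12_bracket (X Y : M2) : m12 (bracket X Y) = m12 (msub (mmul X Y) (mmul Y X)).
Proof. reflexivity. Qed.
Lemma m21_mk (a b c d : C) : m21 (mkM2 a b c d) = c.
Proof. reflexivity. Qed.
Lemma m21_madd (X Y : M2) : m21 (madd X Y) = Cplus (m21 X) (m21 Y).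
Proof. reflexivity. Qed.
Lemma m21_mscal (a : C) (X : M2) : m21 (mscal a X) = Cmult a (m21 X).
Proof. reflexivity. Qed.
Lemma m21_mopp (X : M2) : m21 (mopp X) = Cmult (RtoC (-1)) (m21 X).
Proof. reflexivity. Qed.
Lemma m21_msub (X Y : M2) : m21 (msub X Y) = Cplus (m21 X) (Cmult (RtoC (-1)) (m21 Y)).
Proof. reflexivity. Qed.
Lemma m21_mone : m21 mone = RtoC 0.
Proof. reflexivity. Qed.
Lemma m21_mzero : m21 mzero = RtoC 0.
Proof. reflexivity. Qed.
Lemma m21_mconjT (X : M2) : m21 (mconjT X) = Cconj (m12 X).
Proof. reflexivity. Qed.
Lemma m21_mmul (X Y : M2) : m21 (mmul X Y) = Cplus (Cmult (m21 X) (m11 Y)) (Cmult (m22 X) (m21 Y)).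
Proof. reflexivity. Qed.
Lemma m21_bracket (X Y : M2) : m21 (bracket X Y) = m21 (msub (mmul X Y) (mmul Y X)).
Proof. reflexivity. Qed.
Lemma m22_mk (a b c d : C) : m22 (mkM2 a b c d) = d.
Proof. reflexivity. Qed.
Lemma m22_madd (X Y : M2) : m22 (madd X Y) = Cplus (m22 X) (m22 Y).
Proof. reflexivity. Qed.
Lemma m22_mscal (a : C) (X : M2) : m22 (mscal a X) = Cmult a (m22 X).
Proof. reflexivity. Qed.
Lemma m22_mopp (X : M2) : m22 (mopp X) = Cmult (RtoC (-1)) (m22 X).
Proof. reflexivity. Qed.
Lemma m22_msub (X Y : M2) : m22 (msub X Y) = Cplus (m22 X) (Cmult (RtoC (-1)) (m22 Y)).
Proof. reflexivity. Qed.
Lemma m22_mone : m22 mone = RtoC 1.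
Proof. reflexivity. Qed.
Lemma m22_mzero : m22 mzero = RtoC 0.
Proof. reflexivity. Qed.
Lemma m22_mconjT (X : M2) : m22 (mconjT X) = Cconj (m22 X).
Proof. reflexivity. Qed.
Lemma m22_mmul (X Y : M2) : m22 (mmul X Y) = Cplus (Cmult (m21 X) (m12 Y)) (Cmult (m22 X) (m22 Y)).
Proof. reflexivity. Qed.
Lemma m22_bracket (X Y : M2) : m22 (bracket X Y) = m22 (msub (mmul X Y) (mmul Y X)).
Proof. reflexivity. Qed.
Lemma mtr_e (X : M2) : mtr X = Cplus (m11 X) (m22 X).
Proof. reflexivity. Qed.
Lemma mdet_e (X : M2) : mdet X = Cminus (Cmult (m11 X) (m22 X)) (Cmult (m12 X) (m21 X)).
Proof. reflexivity. Qed.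
Lemma fst_Cplus (x y : C) : fst (Cplus x y) = fst x + fst y.
Proof. reflexivity. Qed.
Lemma snd_Cplus (x y : C) : snd (Cplus x y) = snd x + snd y.
Proof. reflexivity. Qed.
Lemma fst_Cmult (x y : C) : fst (Cmult x y) = fst x * fst y - snd x * snd y.
Proof. reflexivity. Qed.
Lemma snd_Cmult (x y : C) : snd (Cmult x y) = fst x * snd y + snd x * fst y.
Proof. reflexivity. Qed.
Lemma fst_Copp (x : C) : fst (Copp x) = - fst x.
Proof. reflexivity. Qed.
Lemma snd_Copp (x : C) : snd (Copp x) = - snd x.
Proof. reflexivity. Qed.
Lemma fst_Cminus (x y : C) : fst (Cminus x y) = fst x - fst y.
Proof. reflexivity. Qed.
Lemma snd_Cminus (x y : C) : snd (Cminus x y) = snd x - snd y.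
Proof. reflexivity. Qed.
Lemma fst_Cconj (x : C) : fst (Cconj x) = fst x.
Proof. reflexivity. Qed.
Lemma snd_Cconj (x : C) : snd (Cconj x) = - snd x.
Proof. reflexivity. Qed.
Lemma fst_Cinv (x : C) : fst (Cinv x) = fst x / (fst x ^ 2 + snd x ^ 2).
Proof. reflexivity. Qed.
Lemma snd_Cinv (x : C) : snd (Cinv x) = - snd x / (fst x ^ 2 + snd x ^ 2).
Proof. reflexivity. Qed.
Lemma fst_RtoC (r : R) : fst (RtoC r) = r.
Proof. reflexivity. Qed.
Lemma snd_RtoC (r : R) : snd (RtoC r) = 0.
Proof. reflexivity. Qed.
Lemma fst_Ci : fst Ci = 0.
Proof. reflexivity. Qed.
Lemma snd_Ci : snd Ci = 1.
Proof. reflexivity. Qed.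
Lemma fst_pair (a b : R) : fst (a, b) = a.
Proof. reflexivity. Qed.
Lemma snd_pair (a b : R) : snd (a, b) = b.
Proof. reflexivity. Qed.
Lemma Re_e (z : C) : Re z = fst z.
Proof. reflexivity. Qed.
Lemma Im_e (z : C) : Im z = snd z.
Proof. reflexivity. Qed.
Lemma kf_e (X Y : M2) : kf X Y = Cmult (RtoC (-4)) (mtr (mmul X Y)).
Proof. reflexivity. Qed.
Lemma sigma_e (X : M2) : Defs.sigma X = mopp (mconjT X).
Proof. reflexivity. Qed.
Lemma xi_e (A X : M2) : xi A X = bracket A X.
Proof. reflexivity. Qed.
Hint Rewrite m11_mk m11_madd m11_mscal m11_mopp m11_msub m11_mone m11_mzero m11_mconjT m11_mmul m11_bracket m12_mk m12_madd m12_mscal m12_mopp m12_msub m12_mone m12_mzero m12_mconjT m12_mmul m12_bracket m21_mk m21_madd m21_mscal m21_mopp m21_msub m21_mone m21_mzero m21_mconjT m21_mmul m21_bracket m22_mk m22_madd m22_mscal m22_mopp m22_msub m22_mone m22_mzero m22_mconjT m22_mmul m22_bracket mtr_e mdet_e fst_Cplus snd_Cplus fst_Cmult snd_Cmult fst_Copp snd_Copp fst_Cminus snd_Cminus fst_Cconj snd_Cconj fst_Cinv snd_Cinv fst_RtoC snd_RtoC fst_Ci snd_Ci fst_pair snd_pair Re_e Im_e kf_e sigma_e xi_e : cs.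
Ltac unf := cbv [mtr mmul mconjT bracket msub mopp madd mscal mone mzero mdet minv xi kf Defs.sigma eta e_nil
  Cplus Cmult Cconj Copp Cminus Cinv RtoC Ci Re Im m11 m12 m21 m22 fst snd].
Ltac meq := apply M2_eq; apply C_eq; unf.
Ltac ceq := apply C_eq; unf.
Ltac cexp := repeat match goal with
  | X : M2 |- _ => destruct X
  | c : C |- _ => destruct c end.
Lemma g0 A : madd mone (mscal (RtoC 0) A) = mone.
Proof. meq; ring. Qed.
Lemma md_adj X D : md X D -> md (fun s => mkM2 (m22 (X s)) (Copp (m12 (X s))) (Copp (m21 (X s))) (m11 (X s)))
  (mkM2 (m22 D) (Copp (m12 D)) (Copp (m21 D)) (m11 D)).
Proof. intros (H1&H2&H3&H4); split; [|split;[|split]]; simpl; try apply cd_opp; auto. Qed.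

Lemma adj_one : mkM2 (m22 mone) (Copp (m12 mone)) (Copp (m21 mone)) (m11 mone) = mone.
Proof. meq; ring. Qed.
Lemma mmul_1l (X : M2) : mmul mone X = X. Proof. cexp; meq; ring. Qed.
Lemma mmul_1r (X : M2) : mmul X mone = X. Proof. cexp; meq; ring. Qed.
Lemma mmul_0r (X : M2) : mmul X mzero = mzero. Proof. cexp; meq; ring. Qed.
Lemma madd_0r (X : M2) : madd X mzero = X. Proof. cexp; meq; ring. Qed.
Lemma mscal_1 (X : M2) : mscal (RtoC 1) X = X. Proof. cexp; meq; ring. Qed.
Lemma md_curve A Y : mtr A = RtoC 0 -> md (curve A Y) (bracket A Y).
Proof.
  intros HA. unfold curve, minv.
  assert (Hg : md (fun s => madd mone (mscal (RtoC s) A)) (madd mzero (madd (mscal (RtoC 1) A) (mscal (RtoC 0) mzero)))).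
  { apply md_madd. apply md_const. apply (md_mscal (fun s => RtoC s)).
    apply cd_RtoC. apply md_const. }
  eapply md_ext.
  apply md_mmul. apply md_mmul. exact Hg. apply md_const.
  apply md_mscal. apply cd_inv. apply cd_mdet. exact Hg.
  cbv beta. rewrite g0. autorewrite with cs. intro E; ring_simplify in E; lra.
  apply md_adj. exact Hg.
  cbv beta. rewrite !g0. 
  replace (Cinv (mdet mone)) with (RtoC 1) by (ceq; field).
  replace (madd mzero (madd (mscal (RtoC 1) A) (mscal (RtoC 0) mzero))) with A by (meq; ring).
  rewrite ?adj_one, ?mmul_1l, ?mmul_1r, ?mmul_0r, ?madd_0r, ?mscal_1.
  revert HA. destruct A as [[a b] [c d] [e f] [g h]], Y as [y1 y2 y3 y4].
  destruct y1, y2, y3, y4. intro HA.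
  unfold mtr, Cplus, RtoC in HA; simpl in HA. injection HA; intros E1 E2.
  replace g with (-a) by lra. replace h with (-b) by lra.
  clear Hg. meq; ring.
Qed.

Definition ipm (X Z : M2) : R := fst (mtr (mmul X (mconjT Z))).
Lemma ipm_e (X Z : M2) : ipm X Z = fst (mtr (mmul X (mconjT Z))).
Proof. reflexivity. Qed.
Hint Rewrite ipm_e : cs.

Lemma md_ipm X Z D E : md X D -> md Z E ->
  is_derive (fun s => ipm (X s) (Z s)) 0 (ipm D (Z 0) + ipm (X 0) E).
Proof.
  intros HX HZ. unfold ipm.
  eapply Dext. apply cd_fst. apply cd_mtr. apply md_mmul. exact HX. apply md_mconjT. exact HZ.
  destruct D, (Z 0), (X 0), E. unfold ipm; unf. ring.
Qed.

Lemma curve0 A Y : curve A Y 0 = Y.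
Proof. unfold curve, minv. rewrite g0. cexp. meq; field. Qed.

Lemma eta_ipm k Z : eta k Z = 4 * k ^ 2 * ipm Z Z.
Proof. unfold eta. cexp. unfold ipm; unf. ring. Qed.

Lemma ipm_pos Y : Y <> mzero -> 0 < ipm Y Y.
Proof.
  intros H. destruct Y as [[a b] [c d] [e f] [g h]]. unfold ipm; unf.
  destruct (Rlt_dec 0 (a * a - - b * b + (c * c - - d * d) + (e * e - - f * f + (g * g - - h * h)))) as [L|L].
  - nra.
  - exfalso; apply H. assert (a = 0) by nra. assert (b = 0) by nra. assert (c = 0) by nra.
    assert (d = 0) by nra. assert (e = 0) by nra. assert (f = 0) by nra. assert (g = 0) by nra.
    assert (h = 0) by nra. subst. reflexivity.
Qed.

Lemma ipm_sym X Z : ipm X Z = ipm Z X.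
Proof. cexp. unfold ipm; unf. ring. Qed.

Lemma D_eta_curve k A Y : mtr A = RtoC 0 ->
  is_derive (fun s => eta k (curve A Y s)) 0 (8 * k ^ 2 * ipm (bracket A Y) Y).
Proof.
  intros HA.
  apply (Dextf (fun s => 4 * k ^ 2 * ipm (curve A Y s) (curve A Y s))).
  2: intros; rewrite eta_ipm; auto.
  eapply Dext. apply is_derive_scal. apply md_ipm; apply md_curve; auto.
  rewrite curve0. rewrite (ipm_sym Y). ring.
Qed.

Lemma Dcomp (f g : R -> R) x a b : is_derive f (g x) a -> is_derive g x b ->
  is_derive (fun t => f (g t)) x (a * b).
Proof. intros. eapply Dext. apply (is_derive_comp f g); eauto. change (b * a = a * b). ring. Qed.

Lemma LieD_f k (rho r1 : R -> R) A Y :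
  0 < eta k Y -> (forall x, 0 < x -> is_derive rho x (r1 x)) -> mtr A = RtoC 0 ->
  LieD A (fun X => rho (eta k X)) Y = r1 (eta k Y) * (8 * k ^ 2 * ipm (bracket A Y) Y).
Proof.
  intros Hp Hr HA. unfold LieD. apply is_derive_unique.
  apply (Dcomp rho (fun s => eta k (curve A Y s))).
  rewrite curve0. apply Hr; auto. apply D_eta_curve; auto.
Qed.

Lemma lift_spec X V : tangent X V -> traceless (lift X V) /\ V = xi (lift X V) X.
Proof.
  intros [A HA]. unfold lift. apply (epsilon_spec M2_inhabited (fun A => traceless A /\ V = xi A X)).
  exists A; auto.
Qed.

Lemma dfun_f k (rho r1 : R -> R) Y V :
  0 < eta k Y -> (forall x, 0 < x -> is_derive rho x (r1 x)) -> tangent Y V ->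
  dfun (fun X => rho (eta k X)) Y V = r1 (eta k Y) * (8 * k ^ 2 * ipm V Y).
Proof.
  intros Hp Hr HV. destruct (lift_spec Y V HV) as [T E].
  unfold dfun. rewrite LieD_f with (r1 := r1); auto. unfold xi in E. rewrite <- E. auto.
Qed.

Lemma loc_pos (h : R -> R) l : is_derive h 0 l -> 0 < h 0 -> locally 0 (fun s => 0 < h s).
Proof.
  intros Hd Hp.
  assert (Hc := ex_derive_continuous h 0 (ex_intro _ l Hd)).
  apply Hc. exists (mkposreal _ Hp). intros y Hy.
  change (Rabs (y - h 0) < h 0) in Hy. apply Rabs_lt_between in Hy. simpl in *. lra.
Qed.

Lemma md_bracket_l B X D : md X D -> md (fun s => bracket B (X s)) (bracket B D).
Proof.
  intros H. unfold bracket, msub, mopp.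
  eapply md_ext. apply md_madd. apply (md_mmul (fun _ => B)). apply md_const. exact H.
  apply (md_mscal (fun _ => RtoC (-1))). apply cd_const. apply md_mmul. exact H. apply md_const.
  cexp. meq; ring.
Qed.
Lemma md_mscal_c a X D : md X D -> md (fun s => mscal a (X s)) (mscal a D).
Proof.
  intros H. eapply md_ext. apply (md_mscal (fun _ => a)). apply cd_const. exact H.
  cexp. meq; ring.
Qed.

Lemma eta_curve_loc k A Y : mtr A = RtoC 0 -> 0 < eta k Y ->
  locally 0 (fun s => 0 < eta k (curve A Y s)).
Proof.
  intros HA Hp. eapply loc_pos. apply D_eta_curve; auto. rewrite curve0; auto.
Qed.

Definition fI k (rho : R -> R) := Lact Istr (dfun (fun X => rho (eta k X))).

Lemma tr_CiB B : mtr B = RtoC 0 -> mtr (mscal Ci B) = RtoC 0.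
Proof. intros H. revert H. cexp. intro H. injection H; intros. ceq; nra. Qed.

Lemma fI_closed k rho r1 B Z : (forall x, 0 < x -> is_derive rho x (r1 x)) ->
  mtr B = RtoC 0 -> 0 < eta k Z ->
  fI k rho Z (xi B Z) = - (r1 (eta k Z) * (8 * k ^ 2 * ipm (mscal Ci (bracket B Z)) Z)).
Proof.
  intros Hr HB Hp. unfold fI, Lact, Istr. rewrite dfun_f with (r1 := r1); auto.
  exists (mscal Ci B). split. apply tr_CiB; auto. unfold xi. cexp. meq; ring.
Qed.

Lemma T1_I k rho r1 r2 A B Y :
  (forall x, 0 < x -> is_derive rho x (r1 x)) -> (forall x, 0 < x -> is_derive r1 x (r2 x)) ->
  mtr A = RtoC 0 -> mtr B = RtoC 0 -> 0 < eta k Y ->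
  is_derive (fun s => fI k rho (curve A Y s) (xi B (curve A Y s))) 0
   (- (r2 (eta k Y) * (8 * k ^ 2 * ipm (bracket A Y) Y) * (8 * k ^ 2 * ipm (mscal Ci (bracket B Y)) Y)
       + r1 (eta k Y) * (8 * k ^ 2 * (ipm (mscal Ci (bracket B (bracket A Y))) Y
                                     + ipm (mscal Ci (bracket B Y)) (bracket A Y))))).
Proof.
  intros Hr Hr1 HA HB Hp.
  apply (is_derive_ext_loc (fun s => - (r1 (eta k (curve A Y s)) *
     (8 * k ^ 2 * ipm (mscal Ci (bracket B (curve A Y s))) (curve A Y s))))).
  { generalize (eta_curve_loc k A Y HA Hp). apply filter_imp. intros s Hs.
    rewrite fI_closed with (r1 := r1); auto. }
  apply Dopp. eapply Dext. apply Dmult.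
  - apply (Dcomp r1 (fun s => eta k (curve A Y s))). rewrite curve0. apply Hr1; auto.
    apply D_eta_curve; auto.
  - apply is_derive_scal. apply md_ipm. apply md_mscal_c. apply md_bracket_l. apply md_curve; auto.
    apply md_curve; auto.
  - rewrite !curve0. ring.
Qed.

Lemma tr_bracket A B : mtr (bracket A B) = RtoC 0.
Proof. cexp. ceq; ring. Qed.

Lemma T1_I' k (rho r1 r2 : R -> R) A B Y :
  (forall x, 0 < x -> is_derive rho x (r1 x)) -> (forall x, 0 < x -> is_derive r1 x (r2 x)) ->
  mtr A = RtoC 0 -> mtr B = RtoC 0 -> 0 < eta k Y ->
  Derive (fun s : R => fI k rho (curve A Y s) (xi B (curve A Y s))) 0 =
   (- (r2 (eta k Y) * (8 * k ^ 2 * ipm (bracket A Y) Y) * (8 * k ^ 2 * ipm (mscal Ci (bracket B Y)) Y)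
       + r1 (eta k Y) * (8 * k ^ 2 * (ipm (mscal Ci (bracket B (bracket A Y))) Y
                                     + ipm (mscal Ci (bracket B Y)) (bracket A Y))))).
Proof. intros. apply is_derive_unique. apply T1_I; auto. Qed.

Lemma jac_ipm A B Y : ipm (mscal Ci (bracket B (bracket A Y))) Y - ipm (mscal Ci (bracket A (bracket B Y))) Y
  + ipm (mscal Ci (bracket (bracket A B) Y)) Y = 0.
Proof. cexp. unfold ipm; unf. ring. Qed.

Definition DI k (r1 r2 : R -> R) Y V W :=
  - 64 * k ^ 4 * r2 (eta k Y) * (ipm V Y * ipm (mscal Ci W) Y - ipm W Y * ipm (mscal Ci V) Y)
  - 8 * k ^ 2 * r1 (eta k Y) * (ipm (mscal Ci W) V - ipm (mscal Ci V) W).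

Lemma dform_I k (rho r1 r2 : R -> R) Y V W :
  (forall x, 0 < x -> is_derive rho x (r1 x)) -> (forall x, 0 < x -> is_derive r1 x (r2 x)) ->
  0 < eta k Y -> tangent Y V -> tangent Y W ->
  dform (fI k rho) Y V W = DI k r1 r2 Y V W.
Proof.
  intros Hr Hr1 Hp HV HW.
  destruct (lift_spec Y V HV) as [TA EA]. destruct (lift_spec Y W HW) as [TB EB].
  unfold dform. unfold traceless in *.
  set (A := lift Y V) in *. set (B := lift Y W) in *. clearbody A B.
  unfold LieD. cbv beta.
  rewrite (T1_I' k rho r1 r2 A B Y Hr Hr1 TA TB Hp).
  rewrite (T1_I' k rho r1 r2 B A Y Hr Hr1 TB TA Hp).
  rewrite fI_closed with (r1 := r1); auto. 2: apply tr_bracket.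
  unfold xi in EA, EB. subst V W. unfold DI.
  generalize (r1 (eta k Y)) (r2 (eta k Y)). intros p1 p2.
  assert (J := jac_ipm A B Y).
  unfold xi. rewrite (ipm_sym (bracket A Y) Y) in *. nra.
Qed.

Lemma ipm_CiCi W X : ipm (mscal Ci (mscal Ci W)) X = - ipm W X.
Proof. cexp. unfold ipm; unf. ring. Qed.
Lemma ipm_Ci_swap X Z : ipm (mscal Ci X) Z = - ipm X (mscal Ci Z).
Proof. cexp. unfold ipm; unf. ring. Qed.
Lemma ipm_CiCi2 X Z : ipm (mscal Ci X) (mscal Ci Z) = ipm X Z.
Proof. cexp. unfold ipm; unf. ring. Qed.

Definition Gm k (r1 r2 : R -> R) Y T W :=
  -8 * k ^ 2 * (r1 (eta k Y) * ipm T W + 4 * k ^ 2 * r2 (eta k Y) *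
     (ipm T Y * ipm W Y + ipm T (mscal Ci Y) * ipm W (mscal Ci Y))).

Lemma tangent_Ci Y W : tangent Y W -> tangent Y (mscal Ci W).
Proof.
  intros [B [HB E]]. exists (mscal Ci B). split. apply tr_CiB; auto.
  subst W. unfold xi. cexp. meq; ring.
Qed.

Lemma gmet_closed k (rho r1 r2 : R -> R) Y T W :
  (forall x, 0 < x -> is_derive rho x (r1 x)) -> (forall x, 0 < x -> is_derive r1 x (r2 x)) ->
  0 < eta k Y -> tangent Y T -> tangent Y W ->
  gmet (fun X => rho (eta k X)) Y T W = Gm k r1 r2 Y T W.
Proof.
  intros Hr Hr1 Hp HT HW. unfold gmet, omegaI. fold (fI k rho).
  unfold Istr. rewrite dform_I with (r1 := r1) (r2 := r2); auto.
  2: apply tangent_Ci; auto.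
  unfold DI, Gm. rewrite !ipm_CiCi, ipm_CiCi2.
  rewrite (ipm_Ci_swap W Y), (ipm_Ci_swap T Y). rewrite (ipm_sym W T).
  generalize (r1 (eta k Y)) (r2 (eta k Y)). intros. field.
Qed.

Lemma trI1 X P Q : mtr (mmul X (bracket P Q)) = Copp (mtr (mmul (bracket P X) Q)).
Proof. cexp. ceq; ring. Qed.
Lemma trI2 X P Q : mtr (mmul X (bracket P Q)) = mtr (mmul (bracket Q X) P).
Proof. cexp. ceq; ring. Qed.

Lemma kf_br_inv X A A' B B' : bracket A' X = bracket A X -> bracket B' X = bracket B X ->
  kf X (bracket A' B') = kf X (bracket A B).
Proof.
  intros E1 E2. unfold kf. f_equal.
  rewrite trI1, E1, <- trI1, trI2, E2, <- trI2. reflexivity.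
Qed.

Lemma omc_eq X A B : traceless A -> traceless B ->
  omc X (xi A X) (xi B X) = kf X (bracket A B).
Proof.
  intros HA HB. unfold omc.
  assert (T1 : tangent X (xi A X)) by (exists A; auto).
  assert (T2 : tangent X (xi B X)) by (exists B; auto).
  destruct (lift_spec _ _ T1) as [_ E1]. destruct (lift_spec _ _ T2) as [_ E2].
  apply kf_br_inv; unfold xi in *; auto.
Qed.

Definition csqrt (z : C) : C :=
  let r := sqrt (fst z ^ 2 + snd z ^ 2) in
  (sqrt ((r + fst z) / 2), (if Rle_dec 0 (snd z) then 1 else -1) * sqrt ((r - fst z) / 2)).

Lemma csqrt_sq z : Cmult (csqrt z) (csqrt z) = z.
Proof.
  destruct z as [x y]. unfold csqrt. simpl fst; simpl snd.
  set (r := sqrt (x ^ 2 + y ^ 2)).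
  assert (Hr0 : 0 <= r) by apply sqrt_pos.
  assert (Hr2 : r * r = x ^ 2 + y ^ 2) by (apply sqrt_sqrt; nra).
  assert (Hx1 : 0 <= (r + x) / 2) by nra.
  assert (Hx2 : 0 <= (r - x) / 2) by nra.
  assert (S1 := sqrt_sqrt _ Hx1). assert (S2 := sqrt_sqrt _ Hx2).
  assert (S3 : sqrt ((r + x) / 2) * sqrt ((r - x) / 2) = Rabs y / 2).
  { rewrite <- sqrt_mult by auto.
    replace ((r + x) / 2 * ((r - x) / 2)) with ((Rabs y / 2) ^ 2).
    rewrite sqrt_pow2; auto. assert (0 <= Rabs y) by apply Rabs_pos. lra.
    assert (Ha : Rabs y ^ 2 = y ^ 2) by apply pow2_abs. nra. }
  apply C_eq; unf.
  - destruct (Rle_dec 0 y); nra.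
  - destruct (Rle_dec 0 y).
    + rewrite Rabs_pos_eq in S3 by auto. nra.
    + rewrite Rabs_left in S3 by lra. nra.
Qed.

Definition ph (p q : C) : M2 := mkM2 (Cmult p q) (Copp (Cmult p p)) (Cmult q q) (Copp (Cmult p q)).

Lemma Cmult_eq0 (x y : C) : Cmult x y = RtoC 0 -> x = RtoC 0 \/ y = RtoC 0.
Proof.
  intros H. assert (Hm := Cmod_mult x y). rewrite H, Cmod_0 in Hm.
  destruct (Rmult_integral _ _ (eq_sym Hm)) as [H1|H1]; [left|right]; apply Cmod_eq_0; auto.
Qed.

Open Scope C_scope.
Lemma inO_param Y : inO Y -> exists p q, Y = ph p q /\ (p <> RtoC 0 \/ q <> RtoC 0).
Proof.
  intros [Hn H]. destruct Y as [a b c d].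
  assert (E1 := f_equal m11 H). assert (E2 := f_equal m12 H).
  assert (E3 := f_equal m21 H). assert (E4 := f_equal m22 H). simpl in E1, E2, E3, E4.
  assert (Hd : d = - a).
  { destruct (Ceq_dec (a + d) 0) as [Z|Z].
    - rewrite <- (Cplus_0_r (- a)), <- Z. ring.
    - exfalso. apply Hn.
      assert (Hb : b = 0).
      { assert (b * (a + d) = 0) by (rewrite <- E2; ring). destruct (Cmult_eq0 _ _ H0); auto; contradiction. }
      assert (Hc : c = 0).
      { assert (c * (a + d) = 0) by (rewrite <- E3; ring). destruct (Cmult_eq0 _ _ H0); auto; contradiction. }
      subst b c. assert (a * a = 0) by (rewrite <- E1; ring).
      assert (d * d = 0) by (rewrite <- E4; ring).
      destruct (Cmult_eq0 _ _ H0) as [Ha|Ha]; destruct (Cmult_eq0 _ _ H1) as [Hd|Hd]; subst;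
      exfalso; apply Z; ring. }
  subst d.
  set (p := csqrt (- b)). assert (Hp : p * p = - b) by apply csqrt_sq.
  destruct (Ceq_dec p 0) as [Z|Z].
  - assert (Hb : b = 0). { rewrite Z in Hp. replace b with (- (- b)) by ring. rewrite <- Hp. ring. }
    subst b. assert (Ha : a * a = 0) by (rewrite <- E1; ring).
    assert (Ha' : a = 0) by (destruct (Cmult_eq0 _ _ Ha); auto). subst a.
    exists 0, (csqrt c). split.
    + unfold ph. rewrite csqrt_sq. f_equal; ring.
    + right. intro Q. apply Hn. rewrite <- (csqrt_sq c), Q. unfold mzero. f_equal; ring.
  - exists p, (a / p). split.
    + unfold ph. f_equal.
      * field; auto.
      * rewrite Hp. ring.
      * assert (Hb0 : - b <> 0).
        { intro B. apply Z. rewrite B in Hp. destruct (Cmult_eq0 _ _ Hp); auto. }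
        assert (c = a * a / (p * p)). { rewrite Hp. field_simplify_eq. replace (a ^ 2) with (a * a + b * c - b * c) by ring. rewrite E1. ring. intro B; apply Hb0; rewrite B; ring. }
        rewrite H0. field; auto.
      * field; auto.
    + left; auto.
Qed.

Close Scope C_scope.

Definition herm (a0 a1 b0 b1 : C) : C := Cplus (Cmult (Cconj a0) b0) (Cmult (Cconj a1) b1).
Definition nv (p q : C) : R := fst (herm p q p q).
Definition Tv (p q x0 x1 : C) : M2 :=
  mkM2 (Cplus (Cmult x0 q) (Cmult p x1)) (Copp (Cmult (RtoC 2) (Cmult x0 p)))
       (Cmult (RtoC 2) (Cmult x1 q)) (Copp (Cplus (Cmult x1 p) (Cmult q x0))).

(* the J vector *)
Definition zv (a b : R) (p q x0 x1 : C) (i : bool) : C :=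
  let h := Cmult (herm p q x0 x1) (RtoC (/ nv p q)) in
  let c := if i then p else q in let x := if i then x0 else x1 in
  Cplus (Cmult (RtoC a) (Cmult h c)) (Cmult (RtoC b) (Cminus x (Cmult h c))).
Definition wv (tau : C) (a b : R) (p q x0 x1 : C) (i : bool) : C :=
  if i then Cmult tau (Copp (Cconj (zv a b p q x0 x1 false)))
  else Cmult tau (Cconj (zv a b p q x0 x1 true)).

Ltac unf2 := cbv [mtr mmul mconjT bracket msub mopp madd mscal mone mzero mdet minv xi kf Defs.sigma eta e_nil
  Cplus Cmult Cconj Copp Cminus Cinv RtoC Ci Re Im m11 m12 m21 m22 fst snd herm nv Tv wv zv ph ipm].
Lemma V1 (k P1 P2 : R) (lam p q x0 x1 y0 y1 : C) :
  nv p q <> 0 -> P1 <> 0 -> P1 + 4 * k ^ 2 * nv p q ^ 2 * P2 <> 0 ->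
  let n := nv p q in
  let a := / (2 * n * P1) in let b := / (4 * n * (P1 + 4 * k ^ 2 * n ^ 2 * P2)) in
  let w0 := wv (Cconj lam) a b p q x0 x1 true in
  let w1 := wv (Cconj lam) a b p q x0 x1 false in
  -8 * k ^ 2 * (P1 * (2 * n * fst (herm w0 w1 y0 y1) + 2 * fst (Cmult (herm p q w0 w1) (Cconj (herm p q y0 y1))))
     + 4 * k ^ 2 * P2 * ((2 * n * fst (herm p q w0 w1)) * (2 * n * fst (herm p q y0 y1))
                         + (2 * n * snd (herm p q w0 w1)) * (2 * n * snd (herm p q y0 y1))))
  = fst (Cmult lam (Cmult (RtoC (k ^ 2)) (Cmult (RtoC 8) (Cplus (Cmult x0 (Copp y1)) (Cmult x1 y0))))).
Proof.
  intros Hn H1 H2 n a b w0 w1.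
  unfold w0, w1, a, b, n in *. clear w0 w1 a b n.
  destruct p as [p1 p2], q as [q1 q2], x0, x1, y0, y1, lam. unf2. cbv [herm nv fst snd Cplus Cmult Cconj] in Hn, H2.
  field; auto.
Qed.

Definition mvx (A : M2) p q := Cplus (Cmult (m11 A) p) (Cmult (m12 A) q).
Definition mvy (A : M2) p q := Cplus (Cmult (m21 A) p) (Cmult (m22 A) q).

Lemma L1 A p q : mtr A = RtoC 0 -> bracket A (ph p q) = Tv p q (mvx A p q) (mvy A p q).
Proof.
  intros HA. revert HA. destruct A as [[a1 a2] [b1 b2] [c1 c2] [d1 d2]]. cexp. intros HA.
  cbv [mtr Cplus RtoC m11 m22 fst snd] in HA. injection HA; intros E1 E2.
  replace d1 with (-a1) by lra. replace d2 with (-a2) by lra.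
  unfold mvx, mvy; apply M2_eq; apply C_eq; unf2; ring.
Qed.

Lemma L2 p q x0 x1 y0 y1 : ipm (Tv p q x0 x1) (Tv p q y0 y1) =
  2 * nv p q * fst (herm x0 x1 y0 y1) + 2 * fst (Cmult (herm p q x0 x1) (Cconj (herm p q y0 y1))).
Proof. cexp. unf2. ring. Qed.

Lemma L3a p q x0 x1 : ipm (Tv p q x0 x1) (ph p q) = 2 * nv p q * fst (herm p q x0 x1).
Proof. cexp. unf2. ring. Qed.
Lemma L3b p q x0 x1 : ipm (Tv p q x0 x1) (mscal Ci (ph p q)) = 2 * nv p q * snd (herm p q x0 x1).
Proof. cexp. unf2. ring. Qed.
Lemma L5 p q : ipm (ph p q) (ph p q) = nv p q ^ 2.
Proof. cexp. unf2. ring. Qed.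

Lemma L4 A B p q : mtr A = RtoC 0 -> mtr B = RtoC 0 ->
  kf (ph p q) (bracket A B) = Cmult (RtoC 8) (Cplus (Cmult (mvx A p q) (Copp (mvy B p q))) (Cmult (mvy A p q) (mvx B p q))).
Proof.
  intros HA HB. revert HA HB. destruct A as [[a1 a2] [b1 b2] [c1 c2] [d1 d2]].
  destruct B as [[e1 e2] [f1 f2] [g1 g2] [h1 h2]]. cexp. intros HA HB.
  cbv [mtr Cplus RtoC m11 m22 fst snd] in HA, HB. injection HA; intros E1 E2. injection HB; intros E3 E4.
  replace d1 with (-a1) by lra. replace d2 with (-a2) by lra.
  replace h1 with (-e1) by lra. replace h2 with (-e2) by lra.
  unfold mvx, mvy; apply C_eq; unf2; ring.
Qed.

Definition A3 (p q w0 w1 : C) : M2 :=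
  let n := RtoC (/ nv p q) in
  let t := Cmult (herm p q w0 w1) n in
  madd (mscal n (mkM2 (Cmult w0 (Cconj p)) (Cmult w0 (Cconj q)) (Cmult w1 (Cconj p)) (Cmult w1 (Cconj q))))
       (mscal (Copp (Cmult t n)) (mkM2 (Cmult (Cconj q) q) (Copp (Cmult (Cconj q) p))
                                       (Copp (Cmult (Cconj p) q)) (Cmult (Cconj p) p))).

Lemma A3_tr p q w0 w1 : nv p q <> 0 -> mtr (A3 p q w0 w1) = RtoC 0.
Proof. intros H. revert H. cexp. cbv [nv herm Cplus Cmult Cconj fst snd]. unfold A3. intro H. apply C_eq; unf2; field; auto. Qed.
Lemma A3_x p q w0 w1 : nv p q <> 0 -> mvx (A3 p q w0 w1) p q = w0.
Proof. intros H. revert H. cexp. cbv [nv herm Cplus Cmult Cconj fst snd]. unfold A3, mvx. intro H. apply C_eq; unf2; field; auto. Qed.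
Lemma A3_y p q w0 w1 : nv p q <> 0 -> mvy (A3 p q w0 w1) p q = w1.
Proof. intros H. revert H. cexp. cbv [nv herm Cplus Cmult Cconj fst snd]. unfold A3, mvy. intro H. apply C_eq; unf2; field; auto. Qed.

Lemma nv_pos p q : (p <> RtoC 0 \/ q <> RtoC 0) -> 0 < nv p q.
Proof.
  intros H. destruct p as [a b], q as [c d]. unf2.
  destruct H as [H|H].
  - assert (a <> 0 \/ b <> 0). { destruct (Req_dec a 0); destruct (Req_dec b 0); subst; auto;
      exfalso; apply H; reflexivity. }
    destruct H0; nra.
  - assert (c <> 0 \/ d <> 0). { destruct (Req_dec c 0); destruct (Req_dec d 0); subst; auto;
      exfalso; apply H; reflexivity. }
    destruct H0; nra.
Qed.

Definition omL (lam : C) k X V W := fst (Cmult lam (Cmult (RtoC (k ^ 2)) (omc X V W))).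
Lemma omegaJ_L k X V W : omegaJ k X V W = omL (RtoC 1) k X V W.
Proof. unfold omegaJ, omL. destruct (omc X V W). cbv [Cmult RtoC Re fst snd]. ring. Qed.
Lemma omegaK_L k X V W : omegaK k X V W = omL (0, -1) k X V W.
Proof. unfold omegaK, omL. destruct (omc X V W). cbv [Cmult RtoC Im fst snd]. ring. Qed.

Lemma inO_eta k Y : 0 < k -> inO Y -> 0 < eta k Y.
Proof. intros Hk [Hn _]. rewrite eta_ipm. assert (H := ipm_pos Y Hn). assert (0 < k ^ 2) by (apply pow_lt; auto). apply Rmult_lt_0_compat; lra. Qed.

Lemma Jex k (rho r1 r2 : R -> R) lam Y V :
  (forall x, 0 < x -> is_derive rho x (r1 x)) -> (forall x, 0 < x -> is_derive r1 x (r2 x)) ->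
  0 < k -> inO Y -> tangent Y V -> r1 (eta k Y) <> 0 -> r1 (eta k Y) + eta k Y * r2 (eta k Y) <> 0 ->
  exists U, tangent Y U /\ forall W, tangent Y W ->
     gmet (fun X => rho (eta k X)) Y U W = omL lam k Y V W.
Proof.
  intros Hr Hr1 Hk HO HV N1 N2.
  assert (Hp : 0 < eta k Y) by (apply inO_eta; auto).
  destruct (inO_param Y HO) as [p [q [EY Hpq]]].
  assert (Hn := nv_pos p q Hpq). assert (Hn0 : nv p q <> 0) by lra.
  destruct HV as [A [HA EV]]. unfold traceless in HA.
  set (P1 := r1 (eta k Y)) in *. set (P2 := r2 (eta k Y)) in *.
  set (n := nv p q) in *.
  set (a := / (2 * n * P1)). set (b := / (4 * n * (P1 + 4 * k ^ 2 * n ^ 2 * P2))).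
  set (x0 := mvx A p q). set (x1 := mvy A p q).
  set (w0 := wv (Cconj lam) a b p q x0 x1 true). set (w1 := wv (Cconj lam) a b p q x0 x1 false).
  assert (Heta : eta k Y = 4 * k ^ 2 * n ^ 2) by (rewrite eta_ipm, EY, L5; auto).
  exists (Tv p q w0 w1). split.
  - exists (A3 p q w0 w1). split. apply A3_tr; exact Hn0.
    unfold xi. rewrite EY, L1. rewrite A3_x, A3_y by exact Hn0. auto. apply A3_tr; exact Hn0.
  - intros W HW. rewrite gmet_closed with (r1 := r1) (r2 := r2); auto.
    2: { exists (A3 p q w0 w1). split. apply A3_tr; exact Hn0.
         unfold xi. rewrite EY, L1. rewrite A3_x, A3_y by exact Hn0. auto. apply A3_tr; exact Hn0. }
    destruct HW as [B [HB EW]]. unfold traceless in HB.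
    unfold omL. rewrite EV, EW, omc_eq by auto. unfold xi. rewrite EY.
    rewrite L4 by auto. rewrite L1 by auto.
    unfold Gm. rewrite <- EY. fold P1 P2. rewrite EY.
    rewrite L2, !L3a, !L3b.
    rewrite Heta in N2.
    apply (V1 k P1 P2 lam p q x0 x1 (mvx B p q) (mvy B p q)). exact Hn0. exact N1. exact N2.
Qed.

Lemma mmul_assoc X Y Z : mmul (mmul X Y) Z = mmul X (mmul Y Z).
Proof. cexp. meq; ring. Qed.

Lemma minv_l g : mdet g <> RtoC 0 -> mmul (minv g) g = mone.
Proof.
  intros H. destruct g as [a b c d]. unfold mdet in H; simpl in H.
  unfold minv, mdet, mmul, mscal, mone; simpl. f_equal; field; auto.
Qed.

Lemma curve_nil A Y s : mdet (madd mone (mscal (RtoC s) A)) <> RtoC 0 -> mmul Y Y = mzero ->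
  mmul (curve A Y s) (curve A Y s) = mzero.
Proof.
  intros Hd HY. unfold curve. cbv zeta.
  set (g := madd mone (mscal (RtoC s) A)) in *.
  rewrite !mmul_assoc. rewrite <- (mmul_assoc (minv g) g), minv_l by auto.
  rewrite mmul_1l, <- (mmul_assoc Y Y), HY.
  cexp. meq; ring.
Qed.

Lemma det_loc A : locally 0 (fun s => mdet (madd mone (mscal (RtoC s) A)) <> RtoC 0).
Proof.
  assert (Hg : md (fun s => madd mone (mscal (RtoC s) A)) (madd mzero (madd (mscal (RtoC 1) A) (mscal (RtoC 0) mzero)))).
  { apply md_madd. apply md_const. apply (md_mscal (fun s => RtoC s)).
    apply cd_RtoC. apply md_const. }
  destruct (cd_mdet _ _ Hg) as [H1 _].
  eapply filter_imp. 2: { eapply loc_pos. exact H1. cbv beta. rewrite g0.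
     cbv [mdet mone Cminus Cmult Cplus Copp RtoC m11 m12 m21 m22 fst snd]. lra. }
  intros s Hs E. cbv beta in Hs. rewrite E in Hs. simpl in Hs. lra.
Qed.

Lemma inO_loc k A Y : 0 < k -> mtr A = RtoC 0 -> inO Y -> locally 0 (fun s => inO (curve A Y s)).
Proof.
  intros Hk HA HO.
  assert (Hp := inO_eta k Y Hk HO).
  generalize (filter_and _ _ (det_loc A) (eta_curve_loc k A Y HA Hp)).
  apply filter_imp. intros s [Hd He]. split.
  - intro E. rewrite E in He. rewrite eta_ipm in He. cbv [ipm mtr mmul mconjT mzero Cplus Cmult Cconj RtoC m11 m12 m21 m22 fst snd] in He. lra.
  - apply curve_nil; auto. destruct HO; auto.
Qed.

Lemma Tv_half p q : Tv p q (Cmult p (RtoC (/2))) (Cmult q (RtoC (/2))) = ph p q.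
Proof. cexp. unfold Tv, ph. apply M2_eq; apply C_eq; unf; field. Qed.

Lemma tangent_self Y : inO Y -> exists A0, traceless A0 /\ bracket A0 Y = Y.
Proof.
  intros HO. destruct (inO_param Y HO) as [p [q [EY Hpq]]].
  assert (Hn0 : nv p q <> 0) by (assert (H := nv_pos p q Hpq); lra).
  exists (A3 p q (Cmult p (RtoC (/2))) (Cmult q (RtoC (/2)))). split.
  - apply A3_tr; auto.
  - rewrite EY, L1 by (apply A3_tr; auto). rewrite A3_x, A3_y by auto. apply Tv_half.
Qed.

Lemma struct_spec k (rho r1 r2 : R -> R) om lam Y V :
  (forall X V W, om X V W = omL lam k X V W) ->
  (forall x, 0 < x -> is_derive rho x (r1 x)) -> (forall x, 0 < x -> is_derive r1 x (r2 x)) ->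
  0 < k -> inO Y -> tangent Y V -> r1 (eta k Y) <> 0 -> r1 (eta k Y) + eta k Y * r2 (eta k Y) <> 0 ->
  tangent Y (structOf (fun X => rho (eta k X)) om Y V) /\
  forall W, tangent Y W -> gmet (fun X => rho (eta k X)) Y (structOf (fun X => rho (eta k X)) om Y V) W = omL lam k Y V W.
Proof.
  intros Hom Hr Hr1 Hk HO HV N1 N2.
  assert (Hex : exists U, tangent Y U /\ forall W, tangent Y W ->
     gmet (fun X => rho (eta k X)) Y U W = om Y V W).
  { destruct (Jex k rho r1 r2 lam Y V Hr Hr1 Hk HO HV N1 N2) as [U [HU1 HU2]].
    exists U. split; auto. intros W HW. rewrite Hom; auto. }
  assert (S := epsilon_spec M2_inhabited _ Hex). fold (structOf (fun X => rho (eta k X)) om Y V) in S.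
  destruct S as [S1 S2]. split; auto. intros W HW. rewrite <- Hom; auto.
Qed.

Definition Phi (lam : C) k B Z := fst (Cmult lam (Cmult (RtoC (k ^ 2)) (Cmult (RtoC (-4)) (mtr (mmul Z B))))).

Lemma ipm_ZCiZ Z : ipm Z (mscal Ci Z) = 0.
Proof. cexp. unfold ipm; unf. ring. Qed.

Lemma Gm_self k r1 r2 Z T : Gm k r1 r2 Z T Z = -8 * k ^ 2 * (r1 (eta k Z) + eta k Z * r2 (eta k Z)) * ipm T Z.
Proof.
  unfold Gm. rewrite ipm_ZCiZ. generalize (r1 (eta k Z)) (r2 (eta k Z)). intros a b.
  rewrite eta_ipm. ring.
Qed.

Lemma bL_closed k (rho r1 r2 : R -> R) om lam Z B :
  (forall X V W, om X V W = omL lam k X V W) ->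
  (forall x, 0 < x -> is_derive rho x (r1 x)) -> (forall x, 0 < x -> is_derive r1 x (r2 x)) ->
  0 < k -> inO Z -> traceless B -> r1 (eta k Z) <> 0 -> r1 (eta k Z) + eta k Z * r2 (eta k Z) <> 0 ->
  Lact (structOf (fun X => rho (eta k X)) om) (dfun (fun X => rho (eta k X))) Z (xi B Z)
  = r1 (eta k Z) / (r1 (eta k Z) + eta k Z * r2 (eta k Z)) * Phi lam k B Z.
Proof.
  intros Hom Hr Hr1 Hk HO HB N1 N2.
  assert (HV : tangent Z (xi B Z)) by (exists B; auto).
  destruct (struct_spec k rho r1 r2 om lam Z (xi B Z) Hom Hr Hr1 Hk HO HV N1 N2) as [S1 S2].
  set (J := structOf (fun X => rho (eta k X)) om Z (xi B Z)) in *.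
  destruct (tangent_self Z HO) as [A0 [HA0 EA0]].
  assert (HZ : tangent Z Z). { exists A0. split; auto. }
  assert (Hp := inO_eta k Z Hk HO).
  specialize (S2 Z HZ). rewrite gmet_closed with (r1 := r1) (r2 := r2) in S2; auto.
  rewrite Gm_self in S2.
  assert (E := omc_eq Z B A0 HB HA0). unfold xi in E. rewrite EA0 in E.
  unfold omL in S2. unfold xi in S2. rewrite E in S2. unfold kf in S2. rewrite trI2, EA0 in S2.
  unfold Lact. rewrite dfun_f with (r1 := r1); auto.
  unfold Phi. rewrite <- S2. fold J. set (a1 := r1 (eta k Z)) in *. set (a2 := eta k Z * r2 (eta k Z)) in *. set (a3 := ipm J Z). field; auto.
Qed.

Lemma D_Phi lam k B X D : md X D -> is_derive (fun s => Phi lam k B (X s)) 0 (Phi lam k B D).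
Proof.
  intros H. unfold Phi. eapply Dext. apply cd_fst.
  apply (cd_mult (fun _ => lam)). apply cd_const.
  apply (cd_mult (fun _ => RtoC (k ^ 2))). apply cd_const.
  apply (cd_mult (fun _ => RtoC (-4))). apply cd_const.
  apply cd_mtr. apply (md_mmul X (fun _ => B)). exact H. apply md_const.
  cbv beta. destruct lam, (X 0). cexp. unf. ring.
Qed.

Lemma Phi_jac lam k A B Y :
  Phi lam k B (bracket A Y) - Phi lam k A (bracket B Y) + Phi lam k (bracket A B) Y =
  - fst (Cmult lam (Cmult (RtoC (k ^ 2)) (kf Y (bracket A B)))).
Proof.
  unfold Phi, kf.
  assert (E1 : mtr (mmul (bracket A Y) B) = Copp (mtr (mmul Y (bracket A B)))).
  { rewrite trI1. cexp. ceq; ring. }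
  assert (E2 : mtr (mmul (bracket B Y) A) = mtr (mmul Y (bracket A B))) by (rewrite trI2; auto).
  assert (E3 : mtr (mmul (bracket A B) Y) = mtr (mmul Y (bracket A B))).
  { cexp. ceq; ring. }
  rewrite E1, E2. destruct lam, (mtr (mmul Y (bracket A B))). unf. ring.
Qed.

Section J.
Variables (k : R) (rho r1 r2 mu mu1 : R -> R) (om : M2 -> M2 -> M2 -> R) (lam : C).
Hypothesis Hom : forall X V W, om X V W = omL lam k X V W.
Hypothesis Hr : forall x, 0 < x -> is_derive rho x (r1 x).
Hypothesis Hr1 : forall x, 0 < x -> is_derive r1 x (r2 x).
Hypothesis N1 : forall x, 0 < x -> r1 x <> 0.
Hypothesis N2 : forall x, 0 < x -> r1 x + x * r2 x <> 0.
Hypothesis Hmu : forall x, 0 < x -> r1 x / (r1 x + x * r2 x) = mu x.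
Hypothesis Hmu1 : forall x, 0 < x -> is_derive mu x (mu1 x).
Hypothesis Hk : 0 < k.

Definition bL := Lact (structOf (fun X => rho (eta k X)) om) (dfun (fun X => rho (eta k X))).

Lemma bL_closed' Z B : inO Z -> traceless B -> bL Z (xi B Z) = mu (eta k Z) * Phi lam k B Z.
Proof.
  intros HO HB. assert (Hp := inO_eta k Z Hk HO). unfold bL.
  rewrite bL_closed with (r1 := r1) (r2 := r2) (lam := lam); auto.
  rewrite Hmu; auto.
Qed.

Lemma T1_J A B Y : inO Y -> traceless A -> traceless B ->
  is_derive (fun s => bL (curve A Y s) (xi B (curve A Y s))) 0
    (mu1 (eta k Y) * (8 * k ^ 2 * ipm (bracket A Y) Y) * Phi lam k B Y + mu (eta k Y) * Phi lam k B (bracket A Y)).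
Proof.
  intros HO HA HB.
  assert (Hp := inO_eta k Y Hk HO).
  apply (is_derive_ext_loc (fun s => mu (eta k (curve A Y s)) * Phi lam k B (curve A Y s))).
  { generalize (inO_loc k A Y Hk HA HO). apply filter_imp. intros s Hs.
    rewrite bL_closed'; auto. }
  eapply Dext. apply Dmult.
  - apply (Dcomp mu (fun s => eta k (curve A Y s))). cbv beta. rewrite curve0. apply Hmu1; auto.
    apply D_eta_curve; auto.
  - apply D_Phi. apply md_curve; auto.
  - cbv beta. rewrite !curve0. ring.
Qed.

Lemma T1_J' A B Y : inO Y -> traceless A -> traceless B ->
  Derive (fun s : R => bL (curve A Y s) (xi B (curve A Y s))) 0 =
    (mu1 (eta k Y) * (8 * k ^ 2 * ipm (bracket A Y) Y) * Phi lam k B Y + mu (eta k Y) * Phi lam k B (bracket A Y)).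
Proof. intros. apply is_derive_unique. apply T1_J; auto. Qed.

Lemma dform_J Y V W : inO Y -> tangent Y V -> tangent Y W ->
  dform bL Y V W = - mu (eta k Y) * omL lam k Y V W
    + 8 * k ^ 2 * mu1 (eta k Y) * (ipm V Y * Phi lam k (lift Y W) Y - ipm W Y * Phi lam k (lift Y V) Y).
Proof.
  intros HO HV HW.
  destruct (lift_spec Y V HV) as [TA EA]. destruct (lift_spec Y W HW) as [TB EB].
  unfold dform.
  set (A := lift Y V) in *. set (B := lift Y W) in *. clearbody A B.
  unfold LieD. cbv beta.
  rewrite (T1_J' A B Y HO TA TB), (T1_J' B A Y HO TB TA).
  rewrite bL_closed'; auto. 2: apply tr_bracket.
  unfold omL. rewrite EA, EB, omc_eq by auto. unfold xi.
  assert (J := Phi_jac lam k A B Y).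
  generalize (mu (eta k Y)) (mu1 (eta k Y)). intros m m1.
  set (F := fst (Cmult lam (Cmult (RtoC (k ^ 2)) (kf Y (bracket A B))))) in *.
  replace F with (- (Phi lam k B (bracket A Y) - Phi lam k A (bracket B Y) + Phi lam k (bracket A B) Y)) by lra.
  ring.
Qed.
End J.

Section Final.
Variables (k c : R).
Hypothesis Hk : 0 < k.
Hypothesis Hc : 0 <= c.

Definition r1f (x : R) := sqrt (k ^ 2 * x + c) / x.
Definition r2f (x : R) := k ^ 2 / (2 * x * sqrt (k ^ 2 * x + c)) - sqrt (k ^ 2 * x + c) / x ^ 2.
Definition muf (x : R) := 2 + 2 * c / (k ^ 2 * x).
Definition mu1f (x : R) := - 2 * c / (k ^ 2 * x ^ 2).

Lemma k2pos : 0 < k ^ 2.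
Proof. apply pow_lt; auto. Qed.

Lemma spos x : 0 < x -> 0 < sqrt (k ^ 2 * x + c).
Proof. intros. apply sqrt_lt_R0. assert (H1 := k2pos). nra. Qed.
Lemma ssq x : 0 < x -> sqrt (k ^ 2 * x + c) * sqrt (k ^ 2 * x + c) = k ^ 2 * x + c.
Proof. intros. apply sqrt_sqrt. assert (H1 := k2pos). nra. Qed.

Lemma Dr1 x : 0 < x -> is_derive r1f x (r2f x).
Proof.
  intros Hx. assert (Hs := spos x Hx). unfold r1f, r2f.
  assert (Hf : is_derive (fun y => k ^ 2 * y + c) x (k ^ 2)).
  { eapply Dext. apply Dplus. apply is_derive_scal. apply Did. apply Dconst. ring. }
  eapply Dext. apply Ddiv.
  - apply (is_derive_sqrt _ _ _ Hf). assert (H1 := k2pos). nra.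
  - apply Did.
  - lra.
  - cbv beta. field. split; lra.
Qed.

Lemma N1f x : 0 < x -> r1f x <> 0.
Proof. intros Hx. unfold r1f. assert (Hs := spos x Hx). apply Rgt_not_eq. apply Rdiv_lt_0_compat; lra. Qed.

Lemma sum_f x : 0 < x -> r1f x + x * r2f x = k ^ 2 / (2 * sqrt (k ^ 2 * x + c)).
Proof. intros Hx. assert (Hs := spos x Hx). unfold r1f, r2f. field. split; lra. Qed.

Lemma N2f x : 0 < x -> r1f x + x * r2f x <> 0.
Proof. intros Hx. rewrite sum_f; auto. assert (Hs := spos x Hx). assert (H1 := k2pos).
  apply Rgt_not_eq. apply Rdiv_lt_0_compat; lra. Qed.

Lemma Hmuf x : 0 < x -> r1f x / (r1f x + x * r2f x) = muf x.
Proof.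
  intros Hx. rewrite sum_f; auto. assert (Hs := spos x Hx). assert (H1 := k2pos).
  assert (E := ssq x Hx). unfold r1f, muf.
  set (s := sqrt (k ^ 2 * x + c)) in *.
  replace (2 + 2 * c / (k ^ 2 * x)) with (2 * (s * s) / (k ^ 2 * x)) by (rewrite E; field; lra).
  field. lra.
Qed.

Lemma Hmu1f x : 0 < x -> is_derive muf x (mu1f x).
Proof.
  intros Hx. assert (H1 := k2pos). unfold muf, mu1f.
  eapply Dext. apply Dplus. apply Dconst.
  apply (Ddiv (fun _ => 2 * c) (fun y => k ^ 2 * y)). apply Dconst.
  eapply Dext. apply is_derive_scal. apply Did. reflexivity. nra.
  field. lra.
Qed.

Definition A0m := mkM2 (RtoC (/2)) (RtoC 0) (RtoC 0) (RtoC (-/2)).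
Definition B0m := mkM2 (RtoC 0) (RtoC 0) (RtoC 1) (RtoC 0).

Lemma inO_e : inO e_nil.
Proof. split. intro E. assert (H := f_equal m12 E). cbv in H. injection H. lra.
  meq; ring. Qed.
Lemma eta_e : eta k e_nil = 4 * k ^ 2.
Proof. rewrite eta_ipm. unfold ipm; unf. ring. Qed.
Lemma trA0 : traceless A0m. Proof. unfold traceless, A0m. ceq; field. Qed.
Lemma trB0 : traceless B0m. Proof. unfold traceless, B0m. ceq; ring. Qed.

Lemma tr_e_inv B : mtr (mmul e_nil B) = m22 (bracket B e_nil).
Proof. cexp. ceq; ring. Qed.

Lemma Phi_e B : bracket B e_nil = bracket B0m e_nil -> Phi (RtoC 1) k B e_nil = - 4 * k ^ 2.
Proof. intros E. unfold Phi. rewrite tr_e_inv, E. unfold B0m; unf. ring. Qed.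

Lemma kp_c0 (rho : R -> R) om lam :
  (forall X V W, om X V W = omL lam k X V W) ->
  (forall x, 0 < x -> is_derive rho x (r1f x)) -> c = 0 ->
  kaehler_potential_for (fun X => rho (eta k X)) (structOf (fun X => rho (eta k X)) om) om.
Proof.
  intros Hom Hr Hc0 X HO V W HV HW.
  change (Lact (structOf (fun X => rho (eta k X)) om) (dfun (fun X => rho (eta k X))))
    with (bL k rho om).
  rewrite (dform_J k rho r1f r2f muf mu1f om lam Hom Hr Dr1 N1f N2f Hmuf Hmu1f Hk X V W HO HV HW).
  rewrite Hom. assert (Hp := inO_eta k X Hk HO). assert (H1 := k2pos).
  unfold muf, mu1f. rewrite Hc0. field. split; nra.
Qed.

Lemma kp_nec (rho : R -> R) :
  (forall x, 0 < x -> is_derive rho x (r1f x)) ->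
  kaehler_potential_for (fun X => rho (eta k X)) (Jstr k (fun X => rho (eta k X))) (omegaJ k) -> c = 0.
Proof.
  intros Hr HJ.
  set (V := xi A0m e_nil). set (W := xi B0m e_nil).
  assert (HV : tangent e_nil V) by (exists A0m; split; [apply trA0| auto]).
  assert (HW : tangent e_nil W) by (exists B0m; split; [apply trB0| auto]).
  specialize (HJ e_nil inO_e V W HV HW). unfold Jstr in HJ.
  change (Lact (structOf (fun X => rho (eta k X)) (omegaJ k)) (dfun (fun X => rho (eta k X))))
    with (bL k rho (omegaJ k)) in HJ.
  rewrite (dform_J k rho r1f r2f muf mu1f (omegaJ k) (RtoC 1) (omegaJ_L k) Hr Dr1 N1f N2f Hmuf Hmu1f Hk
            e_nil V W inO_e HV HW) in HJ.
  rewrite omegaJ_L in HJ.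
  assert (F3 : omL (RtoC 1) k e_nil V W = 4 * k ^ 2).
  { unfold omL, V, W. rewrite omc_eq by (apply trA0 || apply trB0). unfold A0m, B0m. unf. field. }
  assert (F4 : ipm V e_nil = 1) by (unfold V, A0m, ipm; unf; field).
  assert (F5 : ipm W e_nil = 0) by (unfold W, B0m, ipm; unf; field).
  destruct (lift_spec e_nil W HW) as [_ EW].
  assert (F6 : Phi (RtoC 1) k (lift e_nil W) e_nil = - 4 * k ^ 2).
  { apply Phi_e. unfold xi in EW. rewrite <- EW. reflexivity. }
  rewrite F3, F4, F5, F6, eta_e in HJ.
  assert (H1 := k2pos).
  unfold muf, mu1f in HJ.
  field_simplify in HJ. 2: lra.
  assert (E2 : (128 * k ^ 4 - 32 * c) / (32 * k ^ 2) = 4 * k ^ 2 - c / k ^ 2) by (field; lra).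
  rewrite E2 in HJ.
  assert (E3 : c / k ^ 2 = 0) by lra.
  replace c with (c / k ^ 2 * k ^ 2) by (field; lra). rewrite E3. ring.
Qed.
End Final.

Lemma der_cont (f : R -> R) x l : is_derive f x l -> continuity_pt f x.
Proof.
  intros H. apply derivable_continuous_pt. exists l. apply is_derive_Reals. exact H.
Qed.

Lemma rho_const (k : R) (rho : R -> R) : 0 < k ->
  (forall x, 0 < x -> is_derive rho x (sqrt (k ^ 2 * x + 0) / x)) ->
  forall x, 0 < x -> rho x = 2 * k * sqrt x + (rho 1 - 2 * k).
Proof.
  intros Hk Hr x Hx.
  set (g := fun y => rho y - 2 * k * sqrt y).
  assert (Hg : forall y, 0 < y -> is_derive g y 0).
  { intros y Hy. unfold g. eapply Dext. apply Dminus. apply Hr; auto.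
    apply is_derive_scal. apply (is_derive_sqrt (fun z => z)). apply Did. auto.
    assert (Hs : 0 < sqrt y) by (apply sqrt_lt_R0; auto).
    rewrite Rplus_0_r, sqrt_mult by (try apply pow2_ge_0; lra).
    rewrite sqrt_pow2 by lra.
    assert (Hyy : sqrt y * sqrt y = y) by (apply sqrt_sqrt; lra).
    field_simplify; try lra. rewrite <- Hyy at 2. field. lra. }
  destruct (MVT_gen g 1 x (fun _ => 0)) as [z [Hz E]].
  - intros y Hy. apply Hg. assert (0 < Rmin 1 x) by (apply Rmin_glb_lt; lra). lra.
  - intros y Hy. apply der_cont with 0. apply Hg. assert (0 < Rmin 1 x) by (apply Rmin_glb_lt; lra). lra.
  - unfold g in E. rewrite sqrt_1 in E. lra.
Qed.

Theorem mainTheorem5 (k c : R) (rho : R -> R) :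
  0 < k -> 0 <= c ->
  (forall x, 0 < x -> is_derive rho x (sqrt (k ^ 2 * x + c) / x)) ->
  (hk_potential k (fun X => rho (eta k X)) <-> c = 0) /\
  (c = 0 -> exists C0 : R,
      (forall x, 0 < x -> rho x = 2 * k * sqrt x + C0) /\
      (forall t, 0 < t -> rho (eta k (mscal (RtoC t) e_nil)) - C0 = 4 * k ^ 2 * t)).
Proof.
  intros Hk Hc Hr.
  assert (Hr' : forall x, 0 < x -> is_derive rho x (r1f k c x)) by exact Hr.
  split.
  - split.
    + intros [_ [HJ _]]. exact (kp_nec k c Hk Hc rho Hr' HJ).
    + intros Hc0. split; [| split].
      * intros X HO V W HV HW. reflexivity.
      * exact (kp_c0 k c Hk Hc rho (omegaJ k) (RtoC 1) (omegaJ_L k) Hr' Hc0).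
      * exact (kp_c0 k c Hk Hc rho (omegaK k) (0, -1) (omegaK_L k) Hr' Hc0).
  - intros Hc0. subst c. exists (rho 1 - 2 * k).
    assert (HC := rho_const k rho Hk Hr). split.
    + exact HC.
    + intros t Ht. assert (Heta : eta k (mscal (RtoC t) e_nil) = (2 * k * t) ^ 2).
      { rewrite eta_ipm. unfold ipm; unf. ring. }
      rewrite Heta, HC by (apply pow2_gt_0 || idtac; nra).
      rewrite sqrt_pow2 by nra. ring.
Qed.
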